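(* Let $A\subseteq\omega$ be a c.e. set of density $1$. Then the following are equivalent: (i) $A$ has a computable subset $B$ of density $1$; (ii) there is a function $w\le_T\emptyset'$ which witnesses that $A$ has density $1$.
   Context: For $S\subseteq\omega$ and $n>0$, $\rho_n(S)=|S\cap[0,n)|/n$; $S$ has density $1$ if $\lim_n\rho_n(S)=1$. A function $w:\omega\to\omega$ witnesses that $A$ has density $1$ if for all $k$ and all $n\ge w(k)$, $\rho_n(A)\ge1-2^{-k}$. *)

(* Defs.v *)
(* A self-contained model of (oracle) computability:
   unary partial recursive functions on nat (with a nat pairing), relativised
   to an oracle given as the graph of a function nat -> nat. *)
From mathcomp Require Import all_boot all_algebra.
Set Implicit Arguments. Unset Strict Implicit. Unset Printing Implicit Defensive.
Import GRing.Theory Num.Theory.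

Definition npair (x y : nat) : nat := (2 ^ x * (y.*2.+1)).-1.
Definition nfst (n : nat) : nat := logn 2 n.+1.
Definition nsnd (n : nat) : nat := (n.+1 %/ 2 ^ nfst n).-1./2.

Inductive prog : Type :=
| PZero | PSucc | PId | PFst | PSnd
| POrac
| PComp of prog & prog        (* PComp f g : x |-> f (g x) *)
| PPair of prog & prog
| PRec of prog & prog         (* primitive recursion on the second component *)
| PMu of prog.

Inductive eval (O : nat -> nat -> Prop) : prog -> nat -> nat -> Prop :=
| ev_zero x : eval O PZero x 0
| ev_succ x : eval O PSucc x x.+1
| ev_id x : eval O PId x x
| ev_fst x : eval O PFst x (nfst x)
| ev_snd x : eval O PSnd x (nsnd x)
| ev_orac x y : O x y -> eval O POrac x y
| ev_comp f g x y z : eval O g x y -> eval O f y z -> eval O (PComp f g) x z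
| ev_pair f g x y z : eval O f x y -> eval O g x z ->
    eval O (PPair f g) x (npair y z)
| ev_rec0 f g x y : eval O f x y -> eval O (PRec f g) (npair x 0) y
| ev_recS f g x n r y : eval O (PRec f g) (npair x n) r ->
    eval O g (npair x (npair n r)) y -> eval O (PRec f g) (npair x n.+1) y
| ev_mu f x n : eval O f (npair x n) 0 ->
    (forall m, m < n -> exists v, v <> 0 /\ eval O f (npair x m) v) ->
    eval O (PMu f) x n.

Fixpoint decode_fuel (k n : nat) : prog :=
  match k with
  | 0 => PZero
  | k'.+1 =>
    let a := nsnd n in
    match nfst n with
    | 0 => PZero | 1 => PSucc | 2 => PId | 3 => PFst | 4 => PSnd | 5 => POrac
    | 6 => PComp (decode_fuel k' (nfst a)) (decode_fuel k' (nsnd a))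
    | 7 => PPair (decode_fuel k' (nfst a)) (decode_fuel k' (nsnd a))
    | 8 => PRec (decode_fuel k' (nfst a)) (decode_fuel k' (nsnd a))
    | 9 => PMu (decode_fuel k' a)
    | _ => PZero
    end
  end.
Definition decode (n : nat) : prog := decode_fuel n.+1 n.

(* The empty oracle (constant 0): computations relative to it are the
   ordinary (unrelativised) computations. *)
Definition no_oracle : nat -> nat -> Prop := fun _ y => y = 0.

Definition char_graph (S : nat -> Prop) : nat -> nat -> Prop :=
  fun x y => (S x /\ y = 1) \/ (~ S x /\ y = 0).

Definition halting_set (e : nat) : Prop := exists y, eval no_oracle (decode e) e y.

Definition computable_in (O : nat -> nat -> Prop) (f : nat -> nat) : Prop :=
  exists p, forall x, eval O p x (f x).

Definition leT_halting (w : nat -> nat) : Prop :=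
  computable_in (char_graph halting_set) w.

Definition computable_set (B : nat -> bool) : Prop :=
  computable_in no_oracle (fun x => nat_of_bool (B x)).

Definition ce_set (A : nat -> bool) : Prop :=
  exists p, forall x, A x <-> exists y, eval no_oracle p x y.

Definition rho (S : nat -> bool) (n : nat) : rat :=
  ((count S (iota 0 n))%:R / n%:R)%R.

Definition density_one (S : nat -> bool) : Prop :=
  forall eps : rat, (0 < eps)%R -> exists N, forall n, N <= n -> 0 < n ->
    (`|rho S n - 1| < eps)%R.

Definition witnesses_density_one (w : nat -> nat) (A : nat -> bool) : Prop :=
  forall k n, w k <= n -> 0 < n -> (1 - (2%:R ^- k) <= rho A n)%R.

(* Main.v *)
Require Import Defs.
From mathcomp Require Import all_boot all_order all_algebra.
From mathcomp Require Import zify ring lra.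
From Stdlib Require Import FunctionalExtensionality ClassicalEpsilon.
Set Implicit Arguments. Unset Strict Implicit. Unset Printing Implicit Defensive.

#[global] Arguments npair : simpl never.
#[global] Arguments nfst : simpl never.
#[global] Arguments nsnd : simpl never.

Lemma npairS x y : (npair x y).+1 = 2 ^ x * (y.*2.+1).
Proof. by rewrite /npair prednK // muln_gt0 expn_gt0. Qed.

Lemma nfst_pair x y : nfst (npair x y) = x.
Proof.
rewrite /nfst npairS lognM ?expn_gt0 // lognX logn_prime // eqxx muln1.
rewrite logn_coprime ?addn0 // coprime2n /=. by rewrite odd_double.
Qed.

Lemma nsnd_pair x y : nsnd (npair x y) = y.
Proof.
rewrite /nsnd nfst_pair npairS mulKn ?expn_gt0 //=. by rewrite doubleK.
Qed.

Lemma npair_surj m : npair (nfst m) (nsnd m) = m.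
Proof.
have [q cq Hm] := @pfactor_coprime 2 m.+1 (erefl _) (ltn0Sn m).
rewrite coprime2n in cq.
apply: succn_inj. rewrite npairS /nsnd /nfst.
rewrite {2 4}Hm mulnK ?expn_gt0 //.
have -> : (q.-1./2).*2.+1 = q.
  case: q cq {Hm} => [//|q] /= oq.
  rewrite -[X in _ = X.+1](odd_double_half q) -[odd q]negbK oq /=. by [].
by rewrite mulnC.
Qed.

Lemma npair_ge_l x y : x <= npair x y.
Proof.
rewrite -ltnS npairS. apply: (@leq_trans (2 ^ x)).
  by rewrite ltn_expl.
by rewrite leq_pmulr.
Qed.

Lemma npair_ge_r x y : y <= npair x y.
Proof.
rewrite -ltnS npairS. apply: (@leq_trans (y.*2.+1)).
  by rewrite ltnS -addnn leq_addr.
by rewrite leq_pmull ?expn_gt0.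
Qed.

Lemma npair_gt_r x y : 0 < x -> y < npair x y.
Proof.
move=> hx. rewrite -ltnS npairS. apply: (@leq_trans (y.*2.+1).*2).
  rewrite -addnn; lia.
rewrite -mul2n leq_mul2r /=. by rewrite -(expn1 2) leq_exp2l.
Qed.

Lemma npair_mono_r x y z : y < z -> npair x y < npair x z.
Proof.
move=> h; rewrite -ltnS !npairS ltn_pmul2l ?expn_gt0 //. lia.
Qed.

Section Closure.
Variable O : nat -> nat -> Prop.
Local Notation comp := (computable_in O).

Fixpoint Kp (c : nat) : prog := match c with 0 => PZero | c'.+1 => PComp PSucc (Kp c') end.

Lemma eval_K c x : eval O (Kp c) x c.
Proof. elim: c => [|c IH] /=; [exact: ev_zero | exact: ev_comp IH (ev_succ _ _)]. Qed.

Lemma comp_const c : comp (fun _ => c).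
Proof. exists (Kp c) => x; exact: eval_K. Qed.

Lemma comp_id : comp (fun x => x).
Proof. exists PId => x; exact: ev_id. Qed.

Lemma comp_fst : comp nfst.
Proof. exists PFst => x; exact: ev_fst. Qed.
Lemma comp_snd : comp nsnd.
Proof. exists PSnd => x; exact: ev_snd. Qed.
Lemma comp_succ : comp S.
Proof. exists PSucc => x; exact: ev_succ. Qed.

Lemma comp_ext f g : (forall x, f x = g x) -> comp f -> comp g.
Proof. move=> H [p Hp]; exists p => x; rewrite -H; exact: Hp. Qed.

Lemma comp_app1 (f a : nat -> nat) : comp f -> comp a -> comp (fun x => f (a x)).
Proof. move=> [p Hp] [q Hq]; exists (PComp p q) => x; exact: ev_comp (Hq x) (Hp _). Qed.

Lemma comp_pair (a b : nat -> nat) : comp a -> comp b -> comp (fun x => npair (a x) (b x)).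
Proof. move=> [p Hp] [q Hq]; exists (PPair p q) => x; exact: ev_pair (Hp x) (Hq x). Qed.

Lemma comp_app2 (f : nat -> nat -> nat) (a b : nat -> nat) :
  comp (fun n => f (nfst n) (nsnd n)) -> comp a -> comp b -> comp (fun x => f (a x) (b x)).
Proof.
move=> Hf Ha Hb. apply: comp_ext (comp_app1 Hf (comp_pair Ha Hb)) => x /=.
by rewrite nfst_pair nsnd_pair.
Qed.

Lemma comp_app3 (f : nat -> nat -> nat -> nat) (a b c : nat -> nat) :
  comp (fun n => f (nfst n) (nfst (nsnd n)) (nsnd (nsnd n))) -> comp a -> comp b -> comp c ->
  comp (fun x => f (a x) (b x) (c x)).
Proof.
move=> Hf Ha Hb Hc. apply: comp_ext (comp_app1 Hf (comp_pair Ha (comp_pair Hb Hc))) => x /=.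
by rewrite !(nfst_pair, nsnd_pair).
Qed.

Lemma comp_app4 (f : nat -> nat -> nat -> nat -> nat) (a b c d : nat -> nat) :
  comp (fun n => f (nfst n) (nfst (nsnd n)) (nfst (nsnd (nsnd n))) (nsnd (nsnd (nsnd n)))) ->
  comp a -> comp b -> comp c -> comp d ->
  comp (fun x => f (a x) (b x) (c x) (d x)).
Proof.
move=> Hf Ha Hb Hc Hd.
apply: comp_ext (comp_app1 Hf (comp_pair Ha (comp_pair Hb (comp_pair Hc Hd)))) => x /=.
by rewrite !(nfst_pair, nsnd_pair).
Qed.

Lemma comp_app5 (f : nat -> nat -> nat -> nat -> nat -> nat) (a b c d g : nat -> nat) :
  comp (fun n => f (nfst n) (nfst (nsnd n)) (nfst (nsnd (nsnd n)))
                   (nfst (nsnd (nsnd (nsnd n)))) (nsnd (nsnd (nsnd (nsnd n))))) ->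
  comp a -> comp b -> comp c -> comp d -> comp g ->
  comp (fun x => f (a x) (b x) (c x) (d x) (g x)).
Proof.
move=> Hf Ha Hb Hc Hd Hg.
apply: comp_ext (comp_app1 Hf (comp_pair Ha (comp_pair Hb (comp_pair Hc (comp_pair Hd Hg))))) => x /=.
by rewrite !(nfst_pair, nsnd_pair).
Qed.

End Closure.

Fixpoint precf (F : nat -> nat) (G : nat -> nat -> nat -> nat) (x n : nat) : nat :=
  match n with 0 => F x | n'.+1 => G x n' (precf F G x n') end.

Lemma precf_ext F G F' G' x n : (forall x, F x = F' x) -> (forall k r, k < n -> G x k r = G' x k r) ->
  precf F G x n = precf F' G' x n.
Proof.
move=> HF HG; elim: n HG => [|n IH] HG /=; first exact: HF.
rewrite IH ?HG //; move=> k r hk; apply: HG; lia.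
Qed.

Section Closure2.
Variable O : nat -> nat -> Prop.
Local Notation comp := (computable_in O).

Lemma comp_prec F G : comp F -> comp (fun n => G (nfst n) (nfst (nsnd n)) (nsnd (nsnd n))) ->
  comp (fun n => precf F G (nfst n) (nsnd n)).
Proof.
move=> [p Hp] [q Hq]; exists (PRec p q) => m.
rewrite -{1}(npair_surj m). move: (nfst m) (nsnd m) => x n.
elim: n => [|n IH]; first exact: (ev_rec0 _ (Hp x)).
have H2 := Hq (npair x (npair n (precf F G x n))).
rewrite !(nfst_pair, nsnd_pair) in H2.
exact: (ev_recS IH H2).
Qed.

Lemma comp_precf F G a b : comp F -> comp (fun n => G (nfst n) (nfst (nsnd n)) (nsnd (nsnd n))) ->
  comp a -> comp b -> comp (fun x => precf F G (a x) (b x)).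
Proof. move=> HF HG; apply: comp_app2; exact: comp_prec. Qed.

Lemma comp_mu (f m : nat -> nat) : comp f ->
  (forall x, f (npair x (m x)) = 0 /\ forall i, i < m x -> f (npair x i) <> 0) -> comp m.
Proof.
move=> [p Hp] Hm; exists (PMu p) => x.
have [H0 H1] := Hm x. apply: ev_mu; first by rewrite -H0; exact: Hp.
move=> i hi; exists (f (npair x i)); split; [exact: H1 | exact: Hp].
Qed.

End Closure2.

Lemma precf0 F G x : precf F G x 0 = F x. Proof. by []. Qed.
Lemma precfS F G x n : precf F G x n.+1 = G x n (precf F G x n). Proof. by []. Qed.

Definition cond (c a b : nat) : nat := precf (fun p => nsnd p) (fun p _ _ => nfst p) (npair a b) c.
Lemma cond0 a b : cond 0 a b = b.
Proof. by rewrite /cond precf0 nsnd_pair. Qed.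
Lemma condS c a b : cond c.+1 a b = a.
Proof. by rewrite /cond precfS nfst_pair. Qed.
Lemma condE c a b : cond c a b = if c is 0 then b else a.
Proof. by case: c => [|c]; rewrite ?cond0 ?condS. Qed.

Definition ltnb (m n : nat) : nat := m < n.
Definition eqnb (m n : nat) : nat := m == n.

Ltac comp_t :=
  match goal with
  | |- computable_in _ (fun _ => ?c) => apply: comp_const
  | |- computable_in _ (fun x => x) => apply: comp_id
  | |- computable_in _ (fun x => precf ?F ?G (@?a x) (@?b x)) =>
      apply: (comp_precf (F:=F) (G:=G)); [comp_t | cbv beta; comp_t | comp_t | comp_t]
  | |- computable_in _ (fun x => npair (@?a x) (@?b x)) =>
      apply: (comp_pair (a:=a) (b:=b)); [comp_t | comp_t]
  | |- computable_in _ (fun x => ?f (@?a x) (@?b x) (@?c x) (@?d x) (@?g x)) =>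
      apply: (comp_app5 (f:=f)); [comp_base | comp_t | comp_t | comp_t | comp_t | comp_t]
  | |- computable_in _ (fun x => ?f (@?a x) (@?b x) (@?c x) (@?d x)) =>
      apply: (comp_app4 (f:=f)); [comp_base | comp_t | comp_t | comp_t | comp_t]
  | |- computable_in _ (fun x => ?f (@?a x) (@?b x) (@?c x)) =>
      apply: (comp_app3 (f:=f)); [comp_base | comp_t | comp_t | comp_t]
  | |- computable_in _ (fun x => ?f (@?a x) (@?b x)) =>
      apply: (comp_app2 (f:=f)); [comp_base | comp_t | comp_t]
  | |- computable_in _ (fun x => ?f (@?a x)) =>
      apply: (comp_app1 (f:=f)); [comp_base | comp_t]
  | |- computable_in _ ?f => comp_base
  end
with comp_base :=
  first [ solve [eauto with compdb]
        | apply: comp_fst | apply: comp_snd | apply: comp_succ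
        | (progress cbv beta; comp_t) ].

Section Arith.
Variable O : nat -> nat -> Prop.
Local Notation comp := (computable_in O).

Lemma comp_cond : comp (fun n => cond (nfst n) (nfst (nsnd n)) (nsnd (nsnd n))).
Proof. rewrite /cond. comp_t. Qed.
Hint Resolve comp_cond : compdb.

Lemma comp_pred : comp predn.
Proof.
apply: (comp_ext (f := fun n => precf (fun _ => 0) (fun _ k _ => k) 0 n)).
  by case. comp_t.
Qed.
Hint Resolve comp_pred : compdb.

Lemma comp_add : comp (fun n => nfst n + nsnd n).
Proof.
apply: (comp_ext (f := fun n => precf (fun x => x) (fun _ _ r => r.+1) (nfst n) (nsnd n))).
  move=> n; elim: (nsnd n) => [|k IH]; rewrite ?precf0 ?precfS ?IH; lia.
comp_t.
Qed.
Lemma comp_sub : comp (fun n => nfst n - nsnd n).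
Proof.
apply: (comp_ext (f := fun n => precf (fun x => x) (fun _ _ r => r.-1) (nfst n) (nsnd n))).
  move=> n; elim: (nsnd n) => [|k IH]; rewrite ?precf0 ?precfS ?IH; lia.
comp_t.
Qed.
Hint Resolve comp_add comp_sub : compdb.
Lemma comp_mul : comp (fun n => nfst n * nsnd n).
Proof.
apply: (comp_ext (f := fun n => precf (fun _ => 0) (fun x _ r => r + x) (nfst n) (nsnd n))).
  move=> n; elim: (nsnd n) => [|k IH]; rewrite ?precf0 ?precfS ?IH; nia.
comp_t.
Qed.
Hint Resolve comp_mul : compdb.
Lemma comp_exp : comp (fun n => nfst n ^ nsnd n).
Proof.
apply: (comp_ext (f := fun n => precf (fun _ => 1) (fun x _ r => r * x) (nfst n) (nsnd n))).
  move=> n; elim: (nsnd n) => [|k IH]; rewrite ?precf0 ?precfS ?IH ?expn0 ?expnS //; nia.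
comp_t.
Qed.
Hint Resolve comp_exp : compdb.
Lemma comp_ltnb : comp (fun n => ltnb (nfst n) (nsnd n)).
Proof.
apply: (comp_ext (f := fun n => 1 - ((nfst n).+1 - nsnd n))).
  move=> n; rewrite /ltnb; case: ltnP => h; lia.
comp_t.
Qed.
Hint Resolve comp_ltnb : compdb.
Lemma comp_eqnb : comp (fun n => eqnb (nfst n) (nsnd n)).
Proof.
apply: (comp_ext (f := fun n => 1 - ((nfst n - nsnd n) + (nsnd n - nfst n)))).
  move=> n; rewrite /eqnb; case: eqP => h; lia.
comp_t.
Qed.
Hint Resolve comp_eqnb : compdb.

End Arith.
#[export] Hint Resolve comp_cond comp_pred comp_add comp_sub comp_mul comp_exp comp_ltnb comp_eqnb : compdb.


Lemma nsnd_lt c : 0 < nfst c -> nsnd c < c.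
Proof. move=> h; rewrite -{2}(npair_surj c); exact: npair_gt_r. Qed.
Lemma nfst_le a : nfst a <= a.
Proof. rewrite -{2}(npair_surj a); exact: npair_ge_l. Qed.
Lemma nsnd_le a : nsnd a <= a.
Proof. rewrite -{2}(npair_surj a); exact: npair_ge_r. Qed.

Lemma decode_fuel_stable k1 k2 n : n < k1 -> n < k2 -> decode_fuel k1 n = decode_fuel k2 n.
Proof.
elim: k1 k2 n => [|k1 IH] [|k2] n //= h1 h2.
have ha : 0 < nfst n -> nsnd n < n by exact: nsnd_lt.
have h1' : forall m, m <= nsnd n -> 0 < nfst n -> m < k1.
  move=> m hm hp; have := ha hp; lia.
have h2' : forall m, m <= nsnd n -> 0 < nfst n -> m < k2.
  move=> m hm hp; have := ha hp; lia.
have F := nfst_le (nsnd n). have S := nsnd_le (nsnd n).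
case E: (nfst n) => [|[|[|[|[|[|[|[|[|[|t]]]]]]]]]] //;
  have hp : 0 < nfst n by rewrite E.
- by rewrite (IH k2) ?h1' ?h2' // (IH k2 (nsnd (nsnd n))) ?h1' ?h2'.
- by rewrite (IH k2) ?h1' ?h2' // (IH k2 (nsnd (nsnd n))) ?h1' ?h2'.
- by rewrite (IH k2) ?h1' ?h2' // (IH k2 (nsnd (nsnd n))) ?h1' ?h2'.
- by rewrite (IH k2) ?h1' ?h2'.
Qed.

Definition dec_step (t : nat) (p1 p2 p : prog) : prog :=
  match t with
  | 0 => PZero | 1 => PSucc | 2 => PId | 3 => PFst | 4 => PSnd | 5 => POrac
  | 6 => PComp p1 p2 | 7 => PPair p1 p2 | 8 => PRec p1 p2 | 9 => PMu p | _ => PZero end.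

Lemma decode_eq c : decode c =
  dec_step (nfst c) (decode (nfst (nsnd c))) (decode (nsnd (nsnd c))) (decode (nsnd c)).
Proof.
rewrite {1}/decode /=.
have ha : 0 < nfst c -> nsnd c < c by exact: nsnd_lt.
have F := nfst_le (nsnd c). have S := nsnd_le (nsnd c).
have st : forall m, m <= nsnd c -> 0 < nfst c -> decode_fuel c m = decode m.
  move=> m hm hp; apply: decode_fuel_stable => //; have := ha hp; lia.
case E: (nfst c) => [|[|[|[|[|[|[|[|[|[|t]]]]]]]]]] //=;
  have hp : 0 < nfst c by rewrite E.
all: by rewrite ?st.
Qed.

Fixpoint mst (h : nat -> nat) (n : nat) : nat :=
  match n with 0 => 0 | n'.+1 =>
    match mst h n' with
    | 0 => match h n' with 0 => 1 | 1 => n'.+2 | _ => 0 end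
    | st => st end end.

Definition msearch h s := let st := mst h s.+1 in if 1 < st then st.-1 else 0.

Lemma mst_ext h h' n : (forall k, k < n -> h k = h' k) -> mst h n = mst h' n.
Proof.
elim: n => [|n IH] H //=. rewrite IH; last by move=> k hk; apply: H; lia.
by rewrite H.
Qed.

Lemma mst0 h n : mst h n = 0 -> forall k, k < n -> 1 < h k.
Proof.
elim: n => [|n IH] //= H k hk.
case E: (mst h n) H => [|st] //.
case E2: (h n) => [|[|v]] // _.
have [->|hk'] := eqVneq k n; first by rewrite E2.
apply: IH => //; lia.
Qed.

Lemma mst_found h n k : mst h n = k.+2 -> [/\ k < n, h k = 1 & forall m, m < k -> 1 < h m].
Proof.
elim: n => [|n IH] //=.
case E: (mst h n) => [|st].
  case E2: (h n) => [|[|v]] // [<-]. split => //. exact: mst0.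
move=> H; have [h1 h2 h3] := IH (etrans E H); split => //; lia.
Qed.

Lemma mst_mono h n : mst h n = 0 \/ mst h n.+1 = mst h n.
Proof. rewrite /=; case: (mst h n) => [|st]; [by left | by right]. Qed.

Lemma mst_make h n k : k < n -> h k = 1 -> (forall m, m < k -> 1 < h m) -> mst h n = k.+2.
Proof.
move=> hkn hk hm.
have H0 : mst h k = 0.
  elim: k hm {hkn hk} => [|k IH] hm //=.
  rewrite IH; last by move=> m hmk; apply: hm; lia.
  have := hm k (ltnSn k). by case: (h k) => [|[|v]].
have H1 : mst h k.+1 = k.+2 by rewrite /= H0 hk.
elim: n hkn => [|n IH] hkn //.
rewrite ltnS leq_eqVlt in hkn. case/orP: hkn => [/eqP <-//|hkn'].
by rewrite /= IH.
Qed.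

Lemma msearch_found h s y : msearch h s = y.+1 ->
  [/\ y <= s, h y = 1 & forall m, m < y -> 1 < h m].
Proof.
rewrite /msearch. case E: (mst h s.+1) => [|[|st]] //= [<-].
have [? ? ?] := mst_found E. split => //.
Qed.

Lemma msearch_make h s y : y <= s -> h y = 1 -> (forall m, m < y -> 1 < h m) -> msearch h s = y.+1.
Proof. move=> h1 h2 h3; rewrite /msearch (@mst_make h s.+1 y) //. Qed.

Lemma msearch_ext h h' s : (forall k, k <= s -> h k = h' k) -> msearch h s = msearch h' s.
Proof. move=> H; rewrite /msearch (mst_ext (h' := h')) //. Qed.

Definition stepn (E : nat -> nat -> nat) (o : nat -> nat) (s c x : nat) : nat :=
  if s < npair c x then 0 else
  match nfst c with
  | 1 => x.+2 | 2 => x.+1 | 3 => (nfst x).+1 | 4 => (nsnd x).+1 | 5 => (o x).+1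
  | 6 => if E (nsnd (nsnd c)) x is r.+1 then E (nfst (nsnd c)) r else 0
  | 7 => if E (nfst (nsnd c)) x is r1.+1 then
           (if E (nsnd (nsnd c)) x is r2.+1 then (npair r1 r2).+1 else 0) else 0
  | 8 => if nsnd x is n.+1 then
           (if E c (npair (nfst x) n) is r.+1 then E (nsnd (nsnd c)) (npair (nfst x) (npair n r)) else 0)
         else E (nfst (nsnd c)) (nfst x)
  | 9 => msearch (fun k => E (nsnd c) (npair x k)) s
  | _ => 1 end.

Fixpoint bev (o : nat -> nat) (s c x : nat) : nat :=
  match s with 0 => 0 | s'.+1 => stepn (bev o s') o s' c x end.

Lemma stepn_mono E E' o s s' c x y : s <= s' ->
  (forall c' x' v, E c' x' = v.+1 -> E' c' x' = v.+1) ->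
  stepn E o s c x = y.+1 -> stepn E' o s' c x = y.+1.
Proof.
move=> hs HE; rewrite /stepn.
case: (ltnP s (npair c x)) => // hb.
have -> : (s' < npair c x) = false by apply/negbTE; rewrite -leqNgt; lia.
case: (nfst c) => [|[|[|[|[|[|[|[|[|[|t]]]]]]]]]] //.
- case E1: (E _ x) => [|r] //. by rewrite (HE _ _ _ E1); apply: HE.
- case E1: (E _ x) => [|r] //. case E2: (E (nsnd (nsnd c)) x) => [|r2] //.
  by rewrite (HE _ _ _ E1) (HE _ _ _ E2).
- case: (nsnd x) => [|n]; first by apply: HE.
  case E1: (E c _) => [|r] //. by rewrite (HE _ _ _ E1); apply: HE.
- move=> /msearch_found [h1 h2 h3]. apply: msearch_make; first by lia.
  + exact: HE.
  + move=> m hm; have := h3 m hm. case E1: (E _ _) => [|[|v]] // _.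
    by rewrite (HE _ _ _ E1).
Qed.

Lemma bev_mono1 o s c x y : bev o s c x = y.+1 -> bev o s.+1 c x = y.+1.
Proof.
elim: s c x y => [|s IH] c x y //=.
apply: stepn_mono => //.
Qed.

Lemma bev_mono o s s' c x y : s <= s' -> bev o s c x = y.+1 -> bev o s' c x = y.+1.
Proof.
move=> h; elim: s' h => [|s' IH] h; first by rewrite leqn0 in h; move/eqP: h => ->.
have [->//|hlt] := eqVneq s s'.+1.
move=> H; apply: bev_mono1; apply: IH => //; lia.
Qed.

Lemma bev_use o o' s c x : (forall q, q <= s -> o q = o' q) -> bev o s c x = bev o' s c x.
Proof.
elim: s c x => [|s IH] c x Ho //=.
have IH' : forall c x, bev o s c x = bev o' s c x.
  move=> c' x'; apply: IH => q hq; apply: Ho; lia.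
rewrite /stepn. case: (ltnP s (npair c x)) => // hb.
have hx : x <= s.+1 by have := npair_ge_r c x; lia.
have -> : bev o s = bev o' s.
  by apply: functional_extensionality => c'; apply: functional_extensionality => x'.
by rewrite Ho.
Qed.

Lemma stepn_at E o s c x : npair c x <= s -> stepn E o s c x =
  match nfst c with
  | 1 => x.+2 | 2 => x.+1 | 3 => (nfst x).+1 | 4 => (nsnd x).+1 | 5 => (o x).+1
  | 6 => if E (nsnd (nsnd c)) x is r.+1 then E (nfst (nsnd c)) r else 0
  | 7 => if E (nfst (nsnd c)) x is r1.+1 then
           (if E (nsnd (nsnd c)) x is r2.+1 then (npair r1 r2).+1 else 0) else 0
  | 8 => if nsnd x is n.+1 then
           (if E c (npair (nfst x) n) is r.+1 then E (nsnd (nsnd c)) (npair (nfst x) (npair n r)) else 0)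
         else E (nfst (nsnd c)) (nfst x)
  | 9 => msearch (fun k => E (nsnd c) (npair x k)) s
  | _ => 1 end.
Proof. move=> h; rewrite /stepn; have -> : (s < npair c x) = false by apply/negbTE; rewrite -leqNgt. by []. Qed.

Lemma bev_sound (Orel : nat -> nat -> Prop) o : (forall q, Orel q (o q)) ->
  forall s c x y, bev o s c x = y.+1 -> eval Orel (decode c) x y.
Proof.
move=> Ho; elim=> [|s IH] c x y //=.
rewrite /stepn; case: ltnP => // hb.
have Hdc := decode_eq c.
rewrite Hdc; case E: (nfst c) Hdc => [|[|[|[|[|[|[|[|[|[|t]]]]]]]]]] /= Hdc.
- by move=> [<-]; exact: ev_zero.
- by move=> [<-]; exact: ev_succ.
- by move=> [<-]; exact: ev_id.
- by move=> [<-]; exact: ev_fst.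
- by move=> [<-]; exact: ev_snd.
- by move=> [<-]; exact: ev_orac.
- case E1: (bev o s _ x) => [|r] // H. exact: ev_comp (IH _ _ _ E1) (IH _ _ _ H).
- case E1: (bev o s _ x) => [|r1] //; case E2: (bev o s _ x) => [|r2] // [<-].
  exact: ev_pair (IH _ _ _ E1) (IH _ _ _ E2).
- move=> H; rewrite -(npair_surj x). move: H. case E3: (nsnd x) => [|n].
    move=> H; apply: ev_rec0; exact: IH _ _ _ H.
  case E1: (bev o s c _) => [|r] // H.
  have H1 := IH _ _ _ E1. rewrite Hdc in H1.
  exact: ev_recS H1 (IH _ _ _ H).
- move=> /msearch_found [h1 h2 h3]. apply: ev_mu; first exact: IH _ _ _ h2.
  move=> m hm; have := h3 m hm. case E1: (bev o s _ _) => [|[|v]] // _.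
  exists v.+1; split => //; exact: IH _ _ _ E1.
- by move=> [<-]; exact: ev_zero.
Qed.

Lemma collect (P : nat -> nat -> Prop) n : (forall m s s', s <= s' -> P m s -> P m s') ->
  (forall m, m < n -> exists s, P m s) -> exists S, forall m, m < n -> P m S.
Proof.
move=> Hmono; elim: n => [|n IH] H; first by exists 0.
have [S1 HS1] : exists S, forall m, m < n -> P m S by apply: IH => m hm; apply: H; lia.
have [S2 HS2] := H n (ltnSn n).
exists (maxn S1 S2) => m hm.
have [->|hmn] := eqVneq m n; first by apply: Hmono HS2; lia.
apply: Hmono (HS1 m _); first lia.
rewrite ltn_neqAle hmn /=; lia.
Qed.

Lemma dec_inv c : decode c = dec_step (nfst c) (decode (nfst (nsnd c))) (decode (nsnd (nsnd c))) (decode (nsnd c)).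
Proof. exact: decode_eq. Qed.

Lemma bev_complete (Orel : nat -> nat -> Prop) o : (forall q v, Orel q v -> v = o q) ->
  forall p x y, eval Orel p x y -> forall c, decode c = p -> exists s, bev o s c x = y.+1.
Proof.
move=> Ho. fix IH 4. intros p x y H.
destruct H as [x|x|x|x|x|x y Hxy|f g x y z H1 H2|f g x y z H1 H2|f g x y H1|f g x n r y H1 H2|f x n H0 Hall];
  intros c Hc; rewrite dec_inv in Hc.
- exists (npair c x).+1; rewrite /= stepn_at //.
  case: (nfst c) Hc => [|[|[|[|[|[|[|[|[|[|t]]]]]]]]]] Hc //=; discriminate Hc.
- exists (npair c x).+1; rewrite /= stepn_at //.
  case: (nfst c) Hc => [|[|[|[|[|[|[|[|[|[|t]]]]]]]]]] Hc //=; discriminate Hc.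
- exists (npair c x).+1; rewrite /= stepn_at //.
  case: (nfst c) Hc => [|[|[|[|[|[|[|[|[|[|t]]]]]]]]]] Hc //=; discriminate Hc.
- exists (npair c x).+1; rewrite /= stepn_at //.
  case: (nfst c) Hc => [|[|[|[|[|[|[|[|[|[|t]]]]]]]]]] Hc //=; discriminate Hc.
- exists (npair c x).+1; rewrite /= stepn_at //.
  case: (nfst c) Hc => [|[|[|[|[|[|[|[|[|[|t]]]]]]]]]] Hc //=; discriminate Hc.
- exists (npair c x).+1; rewrite /= stepn_at // (Ho _ _ Hxy).
  case: (nfst c) Hc => [|[|[|[|[|[|[|[|[|[|t]]]]]]]]]] Hc //=; discriminate Hc.
- case E: (nfst c) Hc => [|[|[|[|[|[|[|[|[|[|t]]]]]]]]]] //= [Hf Hg].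
  have [s1 Hs1] := IH _ _ _ H1 _ Hg. have [s2 Hs2] := IH _ _ _ H2 _ Hf.
  exists (maxn (npair c x) (maxn s1 s2)).+1; rewrite /= stepn_at ?E; last by lia.
  rewrite (bev_mono (s := s1) _ Hs1); last by lia.
  apply: (bev_mono _ Hs2); lia.
- case E: (nfst c) Hc => [|[|[|[|[|[|[|[|[|[|t]]]]]]]]]] //= [Hf Hg].
  have [s1 Hs1] := IH _ _ _ H1 _ Hf. have [s2 Hs2] := IH _ _ _ H2 _ Hg.
  exists (maxn (npair c x) (maxn s1 s2)).+1; rewrite /= stepn_at ?E; last by lia.
  rewrite (bev_mono (s := s1) _ Hs1); last by lia.
  by rewrite (bev_mono (s := s2) _ Hs2); last by lia.
- case E: (nfst c) Hc => [|[|[|[|[|[|[|[|[|[|t]]]]]]]]]] //= [Hf Hg].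
  have [s1 Hs1] := IH _ _ _ H1 _ Hf.
  exists (maxn (npair c (npair x 0)) s1).+1; rewrite /= stepn_at ?E; last by lia.
  rewrite nsnd_pair nfst_pair. apply: (bev_mono _ Hs1); lia.
- case E: (nfst c) Hc => [|[|[|[|[|[|[|[|[|[|t]]]]]]]]]] //= [Hf Hg].
  have Hc : decode c = PRec f g by rewrite dec_inv E Hf Hg.
  have [s1 Hs1] := IH _ _ _ H1 _ Hc. have [s2 Hs2] := IH _ _ _ H2 _ Hg.
  exists (maxn (npair c (npair x n.+1)) (maxn s1 s2)).+1; rewrite /= stepn_at ?E; last by lia.
  rewrite nsnd_pair nfst_pair.
  rewrite (bev_mono (s := s1) _ Hs1); last by lia.
  apply: (bev_mono _ Hs2); lia.
- case E: (nfst c) Hc => [|[|[|[|[|[|[|[|[|[|t]]]]]]]]]] //= [Hf].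
  have [s0 Hs0] := IH _ _ _ H0 _ Hf.
  have Hm : forall m, m < n -> exists s, exists2 v, v <> 0 & bev o s (nsnd c) (npair x m) = v.+1.
    move=> m hm. case: (Hall m hm) => v [hv Hev].
    case: (IH _ _ _ Hev _ Hf) => s Hs. exists s; by exists v.
  have Hmono : forall m s s', s <= s' -> (exists2 v, v <> 0 & bev o s (nsnd c) (npair x m) = v.+1) ->
      exists2 v, v <> 0 & bev o s' (nsnd c) (npair x m) = v.+1.
    move=> m s s' hs [v hv H]; exists v => //; exact: bev_mono H.
  have [S HS] := collect Hmono Hm.
  exists (maxn (maxn (npair c x) n) (maxn s0 S)).+1; rewrite /= stepn_at ?E; last by lia.
  apply: msearch_make; first by lia.
    apply: (bev_mono _ Hs0); lia.
  move=> m hm. have [v hv H] := HS m hm. rewrite (bev_mono (s := S) _ H); last by lia.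
  by case: v hv {H}.
Qed.

Definition mus_st (E : nat -> nat -> nat -> nat) env f x n :=
  precf (fun _ => 0) (fun p k st => cond st st
    (cond (E (nfst p) (nfst (nsnd p)) (npair (nsnd (nsnd p)) k))
          (cond (eqnb (E (nfst p) (nfst (nsnd p)) (npair (nsnd (nsnd p)) k)) 1) k.+2 0) 1))
   (npair env (npair f x)) n.

Definition musearch E env f x s :=
  cond (ltnb 1 (mus_st E env f x s.+1)) (mus_st E env f x s.+1).-1 0.

Lemma mus_stE E env f x n : mus_st E env f x n = mst (fun k => E env f (npair x k)) n.
Proof.
rewrite /mus_st; elim: n => [|n IH] //.
rewrite precfS IH /= !(nfst_pair, nsnd_pair).
case: (mst _ n) => [|st]; rewrite ?cond0 ?condS //.
case: (E env f (npair x n)) => [|[|v]]; rewrite ?cond0 ?condS /eqnb //=.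
Qed.

Lemma musearchE E env f x s : musearch E env f x s = msearch (fun k => E env f (npair x k)) s.
Proof.
rewrite /musearch /msearch mus_stE /ltnb.
by case: (1 < _); rewrite ?cond0 ?condS.
Qed.

Definition stepb (E : nat -> nat -> nat -> nat) (Or : nat -> nat -> nat) env s c x :=
 cond (ltnb s (npair c x)) 0
 (cond (eqnb (nfst c) 1) x.+2
 (cond (eqnb (nfst c) 2) x.+1
 (cond (eqnb (nfst c) 3) (nfst x).+1
 (cond (eqnb (nfst c) 4) (nsnd x).+1
 (cond (eqnb (nfst c) 5) (Or env x).+1
 (cond (eqnb (nfst c) 6) (cond (E env (nsnd (nsnd c)) x) (E env (nfst (nsnd c)) (E env (nsnd (nsnd c)) x).-1) 0)
 (cond (eqnb (nfst c) 7) (cond (E env (nfst (nsnd c)) x * E env (nsnd (nsnd c)) x)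
      (npair (E env (nfst (nsnd c)) x).-1 (E env (nsnd (nsnd c)) x).-1).+1 0)
 (cond (eqnb (nfst c) 8) (cond (nsnd x)
      (cond (E env c (npair (nfst x) (nsnd x).-1))
         (E env (nsnd (nsnd c)) (npair (nfst x) (npair (nsnd x).-1 (E env c (npair (nfst x) (nsnd x).-1)).-1))) 0)
      (E env (nfst (nsnd c)) (nfst x)))
 (cond (eqnb (nfst c) 9) (musearch E env (nsnd c) x s)
 1))))))))).

Lemma stepbE E Or env s c x : stepb E Or env s c x = stepn (E env) (Or env) s c x.
Proof.
rewrite /stepb /stepn /ltnb. case: ltnP => h; rewrite ?condS ?cond0 //.
rewrite /eqnb musearchE.
case: (nfst c) => [|[|[|[|[|[|[|[|[|[|t]]]]]]]]]] /=; rewrite ?cond0 ?condS //.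
- by case: (E env _ x) => [|r]; rewrite ?cond0 ?condS.
- by case: (E env (nfst (nsnd c)) x) => [|r1]; case: (E env (nsnd (nsnd c)) x) => [|r2];
    rewrite ?muln0 ?cond0 ?condS.
- case: (nsnd x) => [|n]; rewrite ?cond0 ?condS //=.
  by case: (E env c _) => [|r]; rewrite ?cond0 ?condS.
Qed.

Definition tailsL L d := precf (fun l => l) (fun _ _ r => nsnd r.-1) L d.
Definition ent L d := nfst (tailsL L d).-1.
Definition look s T i := cond (ltnb i s) (ent T (s - i.+1)) 0.
Definition Etab (p c x : nat) := look (nfst (nsnd p)) (nsnd (nsnd p)) (npair c x).
Definition Otab (Or : nat -> nat -> nat) (p q : nat) := Or (nfst p) q.
Definition buildT Or p n := precf (fun _ => 0)
  (fun p i L => (npair (stepb Etab (Otab Or) p (nfst (nsnd p)) (nfst i) (nsnd i)) L).+1) p n.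
Definition Tab Or env s := precf (fun _ => 0) (fun e s T => buildT Or (npair e (npair s T)) s.+1) env s.

Lemma tails_cons v L d : tailsL (npair v L).+1 d.+1 = tailsL L d.
Proof.
elim: d => [|d IH]; first by rewrite /tailsL precfS !precf0 /= nsnd_pair.
have E : forall X k, tailsL X k.+1 = nsnd (tailsL X k).-1 by [].
by rewrite E IH.
Qed.

Lemma ent_cons0 v L : ent (npair v L).+1 0 = v.
Proof. by rewrite /ent /tailsL precf0 /= nfst_pair. Qed.
Lemma ent_consS v L d : ent (npair v L).+1 d.+1 = ent L d.
Proof. by rewrite /ent tails_cons. Qed.

Lemma buildT_ent Or p n i : i < n -> ent (buildT Or p n) (n - i.+1) =
  stepb Etab (Otab Or) p (nfst (nsnd p)) (nfst i) (nsnd i).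
Proof.
elim: n => [|n IH] // hi.
rewrite /buildT precfS -/(buildT Or p n).
have [->|hin] := eqVneq i n; first by rewrite subnn ent_cons0.
have hlt : i < n by rewrite ltn_neqAle hin -ltnS.
have -> : n.+1 - i.+1 = (n - i.+1).+1 by lia.
by rewrite ent_consS IH.
Qed.

Lemma Tab_look Or env s c x : look s (Tab Or env s) (npair c x) = bev (Or env) s c x.
Proof.
elim: s c x => [|s IH] c x; first by rewrite /look /ltnb /= cond0.
rewrite /Tab precfS -/(Tab Or env s) /=.
rewrite /look /ltnb. case: ltnP => h; rewrite ?condS ?cond0.
- rewrite buildT_ent // stepbE !(nfst_pair, nsnd_pair).
  have -> : Etab (npair env (npair s (Tab Or env s))) = bev (Or env) s.
    apply: functional_extensionality => c'; apply: functional_extensionality => x'.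
    by rewrite /Etab !(nfst_pair, nsnd_pair) IH.
  by rewrite /Otab nfst_pair.
- by rewrite /stepn; have -> : (s < npair c x) by lia.
Qed.

Lemma comp_bev O (Or : nat -> nat -> nat) :
  computable_in O (fun n => Or (nfst n) (nsnd n)) ->
  computable_in O (fun n => bev (Or (nfst n)) (nfst (nsnd n)) (nfst (nsnd (nsnd n))) (nsnd (nsnd (nsnd n)))).
Proof.
move=> HOr.
apply: (comp_ext (f := fun n => look (nfst (nsnd n)) (Tab Or (nfst n) (nfst (nsnd n)))
   (npair (nfst (nsnd (nsnd n))) (nsnd (nsnd (nsnd n)))))).
  by move=> n; rewrite Tab_look.
rewrite /look /Tab /buildT /stepb /musearch /mus_st /Etab /Otab /look /ent /tailsL.
comp_t.
Qed.

Module P6m.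
Import Order.TTheory GRing.Theory Num.Theory.

Fixpoint code (p : prog) : nat :=
  match p with
  | PZero => npair 0 0 | PSucc => npair 1 0 | PId => npair 2 0 | PFst => npair 3 0
  | PSnd => npair 4 0 | POrac => npair 5 0
  | PComp f g => npair 6 (npair (code f) (code g))
  | PPair f g => npair 7 (npair (code f) (code g))
  | PRec f g => npair 8 (npair (code f) (code g))
  | PMu f => npair 9 (code f) end.

Lemma decode_code p : decode (code p) = p.
Proof. elim: p => /= [||||||f IHf g IHg|f IHf g IHg|f IHf g IHg|f IHf];
  by rewrite decode_eq !(nfst_pair, nsnd_pair) /= ?IHf ?IHg. Qed.

Lemma eval_det (Orel : nat -> nat -> Prop) o : (forall q v, Orel q v -> v = o q) ->
  forall p x y1 y2, eval Orel p x y1 -> eval Orel p x y2 -> y1 = y2.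
Proof.
move=> Ho p x y1 y2 H1 H2.
have [s1 Hs1] := bev_complete Ho H1 (decode_code p).
have [s2 Hs2] := bev_complete Ho H2 (decode_code p).
have := bev_mono (leq_maxl s1 s2) Hs1. rewrite (bev_mono (leq_maxr s1 s2) Hs2).
by case.
Qed.

Definition miss (S : nat -> bool) n := n - count S (iota 0 n).

Lemma count_le S n : count S (iota 0 n) <= n.
Proof. by rewrite -{2}(size_iota 0 n) count_size. Qed.

Local Open Scope ring_scope.

Lemma rho_ge S n k : (0 < n)%N ->
  (1 - 2%:R ^- k <= rho S n) = (2 ^ k * miss S n <= n)%N.
Proof.
move=> hn. rewrite /rho /miss.
have hc := count_le S n. move: (count S (iota 0 n)) hc => c hc.
have hX : (0 : rat) < 2%:R ^+ k by rewrite exprn_gt0.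
have hnr : (0 : rat) < n%:R by rewrite ltr0n.
rewrite ler_pdivlMr // -(ler_pM2l hX).
have -> : 2%:R ^+ k * ((1 - (2%:R ^+ k)^-1) * n%:R) = (2%:R ^+ k - 1) * (n%:R : rat).
  by rewrite mulrA mulrBr mulr1 mulfV // lt0r_neq0.
rewrite mulrBl mul1r lerBlDr -natrX -!natrM -natrD ler_nat.
apply/idP/idP => h.
- rewrite mulnBr leq_subLR. lia.
- move: h; rewrite mulnBr leq_subLR => h. have : (2 ^ k * c <= 2 ^ k * n)%N by rewrite leq_mul2l hc orbT.
  lia.
Qed.

Lemma dens_nat S : density_one S ->
  forall k, exists N, forall n, (N <= n)%N -> (0 < n)%N -> (2 ^ k * miss S n <= n)%N.
Proof.
move=> H k. have hX : (0 : rat) < 2%:R ^- k by rewrite invr_gt0 exprn_gt0.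
have [N HN] := H _ hX. exists N => n h1 h2.
rewrite -rho_ge //. have := HN n h1 h2. rewrite ltr_norml => /andP [h _].
lra.
Qed.

Lemma pow2_gt m : (m < 2 ^ m)%N.
Proof. elim: m => // m IH; rewrite expnS; lia. Qed.

Lemma nat_dens S : (forall k, exists N, forall n, (N <= n)%N -> (0 < n)%N -> (2 ^ k * miss S n <= n)%N) ->
  density_one S.
Proof.
move=> H eps heps.
have hi : (0 : rat) <= eps^-1 by rewrite invr_ge0 ltW.
have [m hb] : exists m : nat, eps^-1 < m%:R by exists (Num.Def.archi_bound eps^-1); exact: archi_boundP.
have hm : (2%:R ^- m : rat) < eps.
  rewrite -[eps]invrK ltf_pV2 ?posrE ?exprn_gt0 ?invr_gt0 //.
  apply: (lt_le_trans hb). rewrite -natrX ler_nat. exact: ltnW (pow2_gt m).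
have [N HN] := H m. exists N => n h1 h2.
have hr := HN n h1 h2. rewrite -rho_ge // in hr.
have hle : rho S n <= 1.
  rewrite /rho ler_pdivrMr ?ltr0n // mul1r ler_nat. exact: count_le.
move: hr hle hm heps. move: (rho S n) (2%:R ^- m : rat) => r X hr hle hm heps.
rewrite ltr_norml; apply/andP; split; lra.
Qed.

End P6m.
Import P6m.

Lemma count_iotaS (S : nat -> bool) n : count S (iota 0 n.+1) = count S (iota 0 n) + S n.
Proof. by rewrite -addn1 iotaD count_cat /= add0n addn0. Qed.

Definition hchar (q : nat) : nat := if excluded_middle_informative (halting_set q) then 1 else 0.

Lemma comp_orac : computable_in (char_graph halting_set) hchar.
Proof.
exists POrac => q; apply: ev_orac. rewrite /hchar /char_graph.
case: excluded_middle_informative => h; [left | right]; by split.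
Qed.

Lemma hchar_func q v : char_graph halting_set q v -> v = hchar q.
Proof.
rewrite /hchar /char_graph; case: excluded_middle_informative => h [[h1 h2]|[h1 h2]] //.
Qed.

Lemma no_oracle_func q v : no_oracle q v -> v = (fun _ => 0) q.
Proof. by []. Qed.


Definition Pprog (pV pAdd : prog) k N :=
  PMu (PComp pV (PPair (Kp k) (PComp pAdd (PPair (Kp N) PSnd)))).

Section Fwd.
Variable Bn : nat -> nat.
Hypothesis HBn : computable_in no_oracle Bn.

Definition cntB n := precf (fun _ => 0) (fun _ i r => r + Bn i) 0 n.
Definition vb k n := 1 - ltnb n (2 ^ k * (n - cntB n)).

Lemma comp_vb : computable_in no_oracle (fun m => vb (nfst m) (nsnd m)).
Proof. rewrite /vb /cntB. comp_t. Qed.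

Lemma P_halts pV pAdd
  (HpV : forall m, eval no_oracle pV m (vb (nfst m) (nsnd m)))
  (HpAdd : forall m, eval no_oracle pAdd m (nfst m + nsnd m)) k N e :
  (exists y, eval no_oracle (Pprog pV pAdd k N) e y) <-> exists m, vb k (N + m) = 0.
Proof.
have Hbody : forall z, eval no_oracle (PComp pV (PPair (Kp k) (PComp pAdd (PPair (Kp N) PSnd)))) z
    (vb k (N + nsnd z)).
  move=> z. apply: (ev_comp (y := npair k (N + nsnd z))); last first.
    have := HpV (npair k (N + nsnd z)); by rewrite nfst_pair nsnd_pair.
  apply: ev_pair; first exact: eval_K.
  apply: (ev_comp (y := npair N (nsnd z))); last first.
    have := HpAdd (npair N (nsnd z)); by rewrite nfst_pair nsnd_pair.
  apply: ev_pair; [exact: eval_K | exact: ev_snd].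
split.
- move=> [y H]. inversion H; subst. exists y.
  have := eval_det no_oracle_func H1 (Hbody (npair e y)). by rewrite nsnd_pair => <-.
- move=> Hex.
  have Hex' : exists m, vb k (N + m) == 0 by case: Hex => m hm; exists m; apply/eqP.
  exists (ex_minn Hex'). case: ex_minnP => m /eqP hm hmin.
  apply: ev_mu.
    by have := Hbody (npair e m); rewrite nsnd_pair hm.
  move=> i hi. exists (vb k (N + i)); split; last by have := Hbody (npair e i); rewrite nsnd_pair.
  move=> h0. have := hmin i (introT eqP h0). lia.
Qed.

End Fwd.

Fixpoint codeK (k : nat) : nat := match k with 0 => code PZero | k'.+1 => npair 6 (npair (code PSucc) (codeK k')) end.

Lemma codeK_code k : codeK k = code (Kp k).
Proof. by elim: k => //= k ->. Qed.

Lemma codeK_precf k : codeK k = precf (fun _ => code PZero) (fun _ _ r => npair 6 (npair (code PSucc) r)) 0 k.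
Proof. by elim: k => //= k ->. Qed.

Lemma code_P pV pAdd k N : code (Pprog pV pAdd k N) =
  npair 9 (npair 6 (npair (code pV) (npair 7 (npair (codeK k)
    (npair 6 (npair (code pAdd) (npair 7 (npair (codeK N) (code PSnd))))))))).
Proof. by rewrite /Pprog /= !codeK_code. Qed.

Theorem forward (A B : nat -> bool) :
  computable_set B -> (forall x, B x -> A x) -> density_one B ->
  exists w : nat -> nat, leT_halting w /\ witnesses_density_one w A.
Proof.
move=> HB Hsub HdB.
pose Bn := fun x => nat_of_bool (B x).
have HBn : computable_in no_oracle Bn by exact: HB.
have cntE : forall n, cntB Bn n = count B (iota 0 n).
  by elim=> // n IH; rewrite /cntB precfS -/(cntB Bn n) IH count_iotaS.
have vbE : forall k n, (vb Bn k n == 0) = (n < 2 ^ k * miss B n).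
  move=> k n; rewrite /vb cntE /miss /ltnb. by case: (n < _).
have [pV HpV] := comp_vb HBn.
have [pAdd HpAdd] := comp_add no_oracle.
pose cP k N := code (Pprog pV pAdd k N).
have haltE : forall k N, halting_set (cP k N) <-> exists m, vb Bn k (N + m) = 0.
  move=> k N; rewrite /halting_set /cP decode_code; exact: P_halts.
have exN : forall k, exists N, hchar (cP k N) == 0.
  move=> k. have [N0 HN0] := dens_nat HdB k. exists N0.+1.
  rewrite /hchar; case: excluded_middle_informative => // h; exfalso; move/haltE: h => [m /eqP].
  rewrite vbE ltnNge => /negP; apply; apply: HN0; lia.
pose w k := ex_minn (exN k).
exists w; split.
- apply: (comp_mu (f := fun m => hchar (cP (nfst m) (nsnd m)))).
    apply: comp_app1; first exact: comp_orac.
    rewrite /cP. apply: (comp_ext (f := fun m => npair 9 (npair 6 (npair (code pV) (npair 7 (npair (precf (fun _ => code PZero) (fun _ _ r => npair 6 (npair (code PSucc) r)) 0 (nfst m)) (npair 6 (npair (code pAdd) (npair 7 (npair (precf (fun _ => code PZero) (fun _ _ r => npair 6 (npair (code PSucc) r)) 0 (nsnd m)) (code PSnd))))))))))).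
      by move=> m; rewrite code_P !codeK_precf.
    comp_t.
  move=> k; rewrite !(nfst_pair, nsnd_pair) /w.
  case: ex_minnP => N /eqP hN hmin; split => // i hi h0.
  rewrite !(nfst_pair, nsnd_pair) in h0. have := hmin i (introT eqP h0); lia.
- move=> k n hn npos.
  have hw : hchar (cP k (w k)) = 0 by rewrite /w; case: ex_minnP => N /eqP.
  have nh : ~ halting_set (cP k (w k)).
    by move: hw; rewrite /hchar; case: excluded_middle_informative.
  have hB : (2 ^ k * miss B n <= n)%N.
    rewrite leqNgt -vbE; apply/negP => /eqP h0. apply: nh; apply/haltE.
    exists (n - w k). by rewrite subnKC.
  rewrite rho_ge //. apply: leq_trans hB. rewrite leq_mul2l /miss; apply/orP; right.
  apply: leq_sub2l. by apply: sub_count => x; apply: Hsub.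
Qed.

Definition o0 : nat -> nat := fun _ => 0.
Definition Or0 (e q : nat) : nat := 0.
Definition bev4_0 e s c x := bev (Or0 e) s c x.
Definition bev0 s c x := bev o0 s c x.
Definition Hs s q := ltnb 0 (bev0 s q q).
Definition bevH e s c x := bev (Hs e) s c x.
Definition gfun cw k s := (bevH s s cw k).-1.
Definition Asn cA s x := ltnb 0 (bev0 s cA x).
Definition missAs cA s n := precf (fun _ => 0) (fun s i r => r + (1 - Asn cA s i)) s n.
Definition holdsn cA cw s j k :=
  cond (ltnb (2 ^ j) (gfun cw k s)) 1 (ltnb (2 ^ k * missAs cA s (2 ^ j.+1 - 1)) (2 ^ j.+1)).
Definition condb cA cw s j :=
  precf (fun _ => 1) (fun p k r => r * holdsn cA cw (nfst p) (nsnd p) k) (npair s j) j.+1.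

Section CompB.
Variable O : nat -> nat -> Prop.
Local Notation comp := (computable_in O).

Lemma comp_bev4_0 : comp (fun n => bev4_0 (nfst n) (nfst (nsnd n)) (nfst (nsnd (nsnd n))) (nsnd (nsnd (nsnd n)))).
Proof. apply: (@comp_bev O Or0). exact: comp_const. Qed.
Hint Resolve comp_bev4_0 : compdb.

Lemma comp_bev0 : comp (fun n => bev0 (nfst n) (nfst (nsnd n)) (nsnd (nsnd n))).
Proof.
apply: (comp_ext (f := fun n => bev4_0 0 (nfst n) (nfst (nsnd n)) (nsnd (nsnd n)))) => //.
comp_t.
Qed.
Hint Resolve comp_bev0 : compdb.

Lemma comp_Hs : comp (fun n => Hs (nfst n) (nsnd n)).
Proof. rewrite /Hs. comp_t. Qed.

Lemma comp_bevH : comp (fun n => bevH (nfst n) (nfst (nsnd n)) (nfst (nsnd (nsnd n))) (nsnd (nsnd (nsnd n)))).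
Proof. apply: (@comp_bev O Hs). exact: comp_Hs. Qed.
Hint Resolve comp_bevH : compdb.

Lemma comp_condb cA cw : comp (fun n => condb cA cw (nfst n) (nsnd n)).
Proof. rewrite /condb /holdsn /gfun /missAs /Asn. comp_t. Qed.

End CompB.
#[export] Hint Resolve comp_bev0 comp_bevH comp_condb : compdb.

Lemma comp_jx O : computable_in O (fun x => trunc_log 2 x.+1).
Proof.
apply: (comp_mu (f := fun n => 1 - ltnb (nfst n).+1 (2 ^ (nsnd n).+1))); first comp_t.
move=> x; rewrite !(nfst_pair, nsnd_pair) /ltnb trunc_log_ltn //; split => // i hi.
have := trunc_logP (p := 2) (n := x.+1) erefl erefl.
have : 2 ^ i.+1 <= 2 ^ trunc_log 2 x.+1 by rewrite leq_exp2l.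
move=> h1 h2. by rewrite !(nfst_pair, nsnd_pair) ltnNge (leq_trans h1 h2).
Qed.

Section Bwd.
Variables (A : nat -> bool) (pA pw : prog) (w : nat -> nat).
Hypothesis HA : forall x, A x <-> exists y, eval no_oracle pA x y.
Hypothesis Hw : forall k, eval (char_graph halting_set) pw k (w k).
Hypothesis Hwit : witnesses_density_one w A.

Definition As s x : bool := 0 < bev0 s (code pA) x.

Lemma o0_rel q : no_oracle q (o0 q). Proof. by []. Qed.

Lemma As_sound s x : As s x -> A x.
Proof.
rewrite /As; case E: (bev0 s (code pA) x) => [|y] // _.
apply/HA; exists y. have := bev_sound o0_rel E. by rewrite decode_code.
Qed.

Lemma As_complete x : A x -> exists s, As s x.
Proof.
move/HA => [y Hy]. have [s Hs'] := bev_complete no_oracle_func Hy (decode_code pA).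
by exists s; rewrite /As /bev0 /o0 Hs'.
Qed.

Lemma As_mono s s' x : s <= s' -> As s x -> As s' x.
Proof.
rewrite /As /bev0 => hs; case E: (bev o0 s _ x) => [|y] // _.
by rewrite (bev_mono hs E).
Qed.

Lemma As_lim n : exists S, forall s, S <= s -> forall x, x < n -> As s x = A x.
Proof.
have H1 : forall x S S', S <= S' -> (forall s, S <= s -> As s x = A x) ->
    (forall s, S' <= s -> As s x = A x).
  move=> x S S' h H s hs; apply: H; lia.
have H2 : forall x, x < n -> exists S, forall s, S <= s -> As s x = A x.
  move=> x _. case hA: (A x).
  + have [S HS] := As_complete hA. exists S => s hs. exact: As_mono hs HS.
  + exists 0 => s _. apply/negbTE/negP => h. by rewrite (As_sound h) in hA.
have [S HS] := collect H1 H2.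
by exists S => s hs x hx; apply: HS.
Qed.

Lemma missAs_E s n : missAs (code pA) s n = miss (As s) n.
Proof.
elim: n => [|n IH]; first by rewrite /missAs /miss.
rewrite /missAs precfS -/(missAs (code pA) s n) IH /miss count_iotaS.
have := count_le (As s) n. rewrite /Asn /ltnb -/(As s n) /As. case: (0 < _) => /=; lia.
Qed.

Lemma Hs_sound s q : Hs s q = 1 -> halting_set q.
Proof.
rewrite /Hs /ltnb /bev0; case E: (bev o0 s q q) => [|y] // _.
exists y. have := bev_sound o0_rel E. by [].
Qed.

Lemma Hs_lim q : exists T, forall s, T <= s -> Hs s q = hchar q.
Proof.
rewrite /hchar; case: excluded_middle_informative => h.
- case: h => y Hy. have [s Hs'] := bev_complete no_oracle_func Hy (erefl (decode q)).
  exists s => s' hs. by rewrite /Hs /bev0 /o0 (bev_mono hs Hs').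
- exists 0 => s _. rewrite /Hs /ltnb. case E: (0 < _) => //. exfalso; apply: h.
  apply: (Hs_sound (s := s)). by rewrite /Hs /ltnb E.
Qed.

Lemma g_lim k : exists S, forall s, S <= s -> gfun (code pw) k s = w k.
Proof.
have [s0 Hs0] := bev_complete hchar_func (Hw k) (decode_code pw).
have H1 : forall q T T', T <= T' -> (forall s, T <= s -> Hs s q = hchar q) ->
    (forall s, T' <= s -> Hs s q = hchar q).
  move=> q S S' h H s hs; apply: H; lia.
have H2 : forall q, q < s0.+1 -> exists T, forall s, T <= s -> Hs s q = hchar q.
  move=> q _; exact: Hs_lim.
have [T HT] := collect H1 H2.
exists (maxn s0 T) => s hs. rewrite /gfun /bevH.
have Hb : bev (Hs s) s0 (code pw) k = (w k).+1.
  rewrite -Hs0. apply: bev_use => q hq; apply: HT; lia.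
by rewrite (bev_mono (s' := s) _ Hb) //; lia.
Qed.

End Bwd.

Lemma miss_predC S n : miss S n = count (predC S) (iota 0 n).
Proof. rewrite /miss. have := count_predC S (iota 0 n). rewrite size_iota; lia. Qed.

Lemma cC_split S m : count (predC S) (iota 0 (2 ^ m.+1 - 1)) =
  count (predC S) (iota 0 (2 ^ m - 1)) + count (predC S) (iota (2 ^ m - 1) (2 ^ m)).
Proof.
have h : 2 ^ m.+1 - 1 = (2 ^ m - 1) + 2 ^ m.
  have := expn_gt0 2 m; rewrite expnS; lia.
by rewrite h iotaD count_cat add0n.
Qed.

Lemma cC_mono S n n' : n <= n' -> count (predC S) (iota 0 n) <= count (predC S) (iota 0 n').
Proof. move=> h; rewrite -(subnKC h) iotaD count_cat; exact: leq_addr. Qed.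

Lemma cC_le S n : count (predC S) (iota 0 n) <= n.
Proof. by rewrite -{2}(size_iota 0 n) count_size. Qed.

Lemma blocks_dens S :
  (forall k, exists J, forall j, J <= j -> 2 ^ k * count (predC S) (iota (2 ^ j - 1) (2 ^ j)) <= 2 ^ j.+1) ->
  forall k, exists N, forall n, N <= n -> 0 < n -> 2 ^ k * miss S n <= n.
Proof.
move=> H k. have [J HJ] := H k.+3. set K := 2 ^ k.+3.
have C1 : forall d, K * count (predC S) (iota 0 (2 ^ (J + d).+1 - 1)) <= K * 2 ^ J + 2 ^ (J + d).+2.
  elim=> [|d IH].
  - rewrite addn0 cC_split mulnDr.
    have h1 : K * count (predC S) (iota 0 (2 ^ J - 1)) <= K * 2 ^ J.
      rewrite leq_mul2l; apply/orP; right; apply: leq_trans (cC_le _ _) _; lia.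
    have h2 := HJ J (leqnn J).
    have h3 : 2 ^ J.+2 = 2 * 2 ^ J.+1 by rewrite expnS.
    lia.
  - rewrite addnS cC_split mulnDr.
    have h2 := HJ (J + d).+1 (leq_trans (leq_addr d J) (leqnSn _)).
    have h3 : 2 ^ (J + d).+3 = 2 * 2 ^ (J + d).+2 by rewrite expnS.
    have h4 : 2 ^ (J + d).+2 = 2 * 2 ^ (J + d).+1 by rewrite expnS.
    lia.
have C2 : forall n, 0 < n -> K * miss S n <= K * 2 ^ J + 4 * n.
  move=> n hn. rewrite miss_predC.
  have /andP [hb1 hb2] : 2 ^ trunc_log 2 n <= n < 2 ^ (trunc_log 2 n).+1.
    exact: (trunc_log_bounds (p := 2) (n := n) erefl hn).
  set m := trunc_log 2 n in hb1 hb2.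
  case: (leqP J m) => hJ.
  - have h := C1 (m - J). rewrite (subnKC hJ) in h.
    have h5 : K * count (predC S) (iota 0 n) <= K * count (predC S) (iota 0 (2 ^ m.+1 - 1)).
      rewrite leq_mul2l; apply/orP; right; apply: cC_mono; lia.
    have h6 : 2 ^ m.+2 = 4 * 2 ^ m by rewrite !expnS; lia.
    lia.
  - have h5 : count (predC S) (iota 0 n) <= 2 ^ J.
      apply: leq_trans (cC_le _ _) _. apply: leq_trans (ltnW hb2) _. by rewrite leq_exp2l.
    have : K * count (predC S) (iota 0 n) <= K * 2 ^ J by rewrite leq_mul2l h5 orbT.
    lia.
exists (K * 2 ^ J) => n h1 h2.
have := C2 n h2.
have hK : K * miss S n = 8 * (2 ^ k * miss S n) by rewrite /K !expnS !mulnA.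
rewrite hK. lia.
Qed.

Section Bwd2.
Variables (A : nat -> bool) (pA pw : prog) (w : nat -> nat).
Hypothesis HA : forall x, A x <-> exists y, eval no_oracle pA x y.
Hypothesis Hw : forall k, eval (char_graph halting_set) pw k (w k).
Hypothesis Hwit : witnesses_density_one w A.

Local Notation cA := (code pA).
Local Notation cw := (code pw).

Definition holdsb s j k : bool :=
  (2 ^ j < gfun cw k s) || (2 ^ k * miss (As pA s) (2 ^ j.+1 - 1) < 2 ^ j.+1).

Lemma condbE s j : condb cA cw s j = all (holdsb s j) (iota 0 j.+1).
Proof.
rewrite /condb. elim: j.+1 => [|n IH] //.
rewrite precfS IH !(nfst_pair, nsnd_pair) -addn1 iotaD all_cat /= andbT add0n.
rewrite /holdsn /holdsb /ltnb missAs_E.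
case: (2 ^ j < _); rewrite ?condS ?cond0; case: (all _ _); case: (_ < _) => //.
Qed.

Lemma exD j : exists dd, all (holdsb (j + dd) j) (iota 0 j.+1).
Proof.
have H1 : forall k T T', T <= T' -> (forall s, T <= s -> gfun cw k s = w k) ->
    (forall s, T' <= s -> gfun cw k s = w k).
  move=> k S S' h H s hs; apply: H; lia.
have H2 : forall k, k < j.+1 -> exists T, forall s, T <= s -> gfun cw k s = w k.
  move=> k _; exact: g_lim.
have [S1 HS1] := collect H1 H2.
have [S2 HS2] := As_lim HA (2 ^ j.+1 - 1).
exists (S1 + S2). apply/allP => k; rewrite mem_iota add0n => /andP [_ hk].
rewrite /holdsb. case: ltnP => //= hg.
rewrite HS1 // in hg; last lia.
set n := 2 ^ j.+1 - 1.
have hn0 : 0 < n by rewrite /n expnS; have := expn_gt0 2 j; lia.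
have hwn : w k <= n by rewrite /n expnS; have := expn_gt0 2 j; lia.
have hm : miss (As pA (j + (S1 + S2))) n = miss A n.
  rewrite /miss; congr (_ - _); apply: eq_in_count => x; rewrite mem_iota add0n => /andP [_ hx].
  apply: HS2 => //; lia.
rewrite hm. have := Hwit hwn hn0. rewrite rho_ge // => h. apply: leq_ltn_trans h _.
rewrite /n; have := expn_gt0 2 j.+1; lia.
Qed.

Definition dd j := ex_minn (exD j).
Definition tt j := j + dd j.

Lemma tt_cond j : all (holdsb (tt j) j) (iota 0 j.+1).
Proof. rewrite /tt /dd; by case: ex_minnP. Qed.

Definition Bb x := As pA (tt (trunc_log 2 x.+1)) x.

Lemma Bb_sub x : Bb x -> A x.
Proof. exact: As_sound. Qed.

Lemma comp_dd : computable_in no_oracle dd.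
Proof.
apply: (comp_mu (f := fun n => 1 - condb cA cw (nfst n + nsnd n) (nfst n))); first comp_t.
move=> j; rewrite !(nfst_pair, nsnd_pair) condbE /dd. case: ex_minnP => d hd hmin.
rewrite hd; split => // i hi. rewrite !(nfst_pair, nsnd_pair) condbE.
case E: (all _ _) => //. have := hmin i E. lia.
Qed.

Lemma comp_Bb : computable_set Bb.
Proof.
have Hdd := comp_dd. have Hj := comp_jx no_oracle.
apply: (comp_ext (f := fun x => ltnb 0 (bev0 (trunc_log 2 x.+1 + dd (trunc_log 2 x.+1)) cA x))) => //.
comp_t.
Qed.

Lemma Bb_blocks k : exists J, forall j, J <= j ->
  2 ^ k * count (predC Bb) (iota (2 ^ j - 1) (2 ^ j)) <= 2 ^ j.+1.
Proof.
have [Sk HSk] := g_lim Hw k.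
exists (maxn (maxn Sk k) (w k)) => j hj.
set s := tt j.
have hs : j <= s by rewrite /s /tt leq_addr.
have hc := tt_cond j. move/allP: hc => /(_ k). rewrite mem_iota add0n.
have hkj : k < j.+1 by lia.
move=> /(_ (hkj)) /orP [hg|hm].
  rewrite HSk in hg; last by lia.
  have := ltn_expl j (ltnSn 1). lia.
have -> : count (predC Bb) (iota (2 ^ j - 1) (2 ^ j)) = count (predC (As pA s)) (iota (2 ^ j - 1) (2 ^ j)).
  apply: eq_in_count => x; rewrite mem_iota => /andP [h1 h2].
  rewrite /= /Bb (@trunc_log_eq 2 j x.+1) //.
  have hp := expn_gt0 2 j; rewrite expnS in h2 *; apply/andP; split; lia.
apply: leq_trans (ltnW hm). rewrite leq_mul2l; apply/orP; right.
rewrite miss_predC cC_split; exact: leq_addl.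
Qed.

End Bwd2.

Theorem backward (A : nat -> bool) :
  ce_set A -> (exists w : nat -> nat, leT_halting w /\ witnesses_density_one w A) ->
  exists B : nat -> bool, computable_set B /\ (forall x, B x -> A x) /\ density_one B.
Proof.
move=> [pA HA] [w [[pw Hw] Hwit]].
exists (Bb HA Hw Hwit); split; last split.
- exact: comp_Bb.
- move=> x; exact: Bb_sub.
- apply: nat_dens. apply: blocks_dens. exact: Bb_blocks.
Qed.

Theorem mainTheorem12 (A : nat -> bool) :
  ce_set A -> density_one A ->
  ((exists B : nat -> bool,
       computable_set B /\ (forall x, B x -> A x) /\ density_one B)
   <->
   (exists w : nat -> nat, leT_halting w /\ witnesses_density_one w A)).
Proof.
move=> hce hd; split.
- move=> [B [HB [Hs HdB]]]; exact: forward HB Hs HdB.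
- exact: backward hce.
Qed.
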